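(* Let $R>q>1$ and $f\in H(\mathbb{D}_R)$ with $f(z)=\sum_{m=0}^\infty a_mz^m$. Then for $|z|<R/q^2$, \[L_q(f;z)=\sum_{m=2}^\infty a_m\left(q\sum_{i=1}^{m-1}[i]_q+\sum_{i=1}^{m-1}[i]_{q^{-1}}\right)z^{m-1}(1-z).\]
   Context: For an integer $i\ge0$ and $p>0$, $[i]_p=1+p+\dots+p^{i-1}$. $\mathbb{D}_R=\{|z|<R\}$, $H(\mathbb{D}_R)$ the analytic functions on it. For $p>0$, $p\ne1$, $D_pf(z)=\frac{f(pz)-f(z)}{(p-1)z}$ for $z\ne0$ and $D_pf(0)=f'(0)$. For $|z|<R/q^2$, $L_q(f;z)=\frac{(1-z)\,q\,(D_qf(z)-D_{q^{-1}}f(z))}{q-1}$. *)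

(* Defs.v *)
From Stdlib Require Import Reals ClassicalEpsilon.
From Coquelicot Require Import Coquelicot.
Open Scope R_scope.

Fixpoint qint (p : R) (i : nat) : R :=
  match i with
  | O => 0
  | S j => qint p j + p ^ j
  end.

Definition cderiv (f : C -> C) (z : C) : C :=
  epsilon (inhabits (RtoC 0)) (fun l : C => @is_derive C_AbsRing C_NormedModule f z l).

Definition Dq (p : R) (f : C -> C) (z : C) : C :=
  if Ceq_dec z (RtoC 0) then cderiv f (RtoC 0)
  else ((f (RtoC p * z) - f z) / ((RtoC p - RtoC 1) * z))%C.

Definition Lq (q : R) (f : C -> C) (z : C) : C :=
  ((RtoC 1 - z) * RtoC q * (Dq q f z - Dq (/ q) f z) / (RtoC q - RtoC 1))%C.

(* Main.v *)
Require Import Defs.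
From Stdlib Require Import Reals ClassicalEpsilon Lia Lra.
From Coquelicot Require Import Coquelicot.
Open Scope R_scope.

Lemma Rinv_lt_1 (q : R) : 1 < q -> / q < 1.
Proof. intro h. rewrite <- Rinv_1 at 1. apply Rinv_1_lt_contravar; lra. Qed.

Lemma qint_pow (p : R) (n : nat) : p ^ n - 1 = (p - 1) * qint p n.
Proof. induction n; simpl; [ring|]. rewrite Rmult_plus_distr_l, <- IHn. ring. Qed.

Lemma sum_id (q : R) (n : nat) : 1 < q ->
  q * sum_n_m (fun i => qint q i) 1 n + sum_n_m (fun i => qint (/ q) i) 1 n
  = q / (q - 1) * (qint q (S n) - qint (/ q) (S n)).
Proof.
  intros Hq. induction n.
  - rewrite !sum_n_m_zero by lia. simpl. unfold zero; simpl. field. lra.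
  - rewrite !sum_n_Sm by lia. change plus with Rplus.
    replace (q * (sum_n_m (fun i : nat => qint q i) 1 n + qint q (S n)) +
      (sum_n_m (fun i : nat => qint (/ q) i) 1 n + qint (/ q) (S n)))
    with ((q * sum_n_m (fun i : nat => qint q i) 1 n + sum_n_m (fun i : nat => qint (/ q) i) 1 n)
          + q * qint q (S n) + qint (/ q) (S n)) by ring.
    rewrite IHn.
    assert (H1 : qint q (S n) = (q ^ (S n) - 1) / (q - 1)).
    { rewrite qint_pow. field. lra. }
    assert (H2 : qint (/q) (S n) = ((/q) ^ (S n) - 1) / (/q - 1)).
    { rewrite qint_pow. field. split; [|lra].
      intro h. assert (/q < 1). { apply Rinv_lt_1; lra. } lra. }
    replace (qint q (S (S n))) with (qint q (S n) + q ^ (S n)) by reflexivity.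
    replace (qint (/q) (S (S n))) with (qint (/q) (S n) + (/q) ^ (S n)) by reflexivity.
    rewrite H1, H2. rewrite pow_inv.
    assert (q ^ S n <> 0) by (apply pow_nonzero; lra).
    assert (/q < 1) by (apply Rinv_lt_1; lra).
    field; repeat split; try lra.
Qed.

Lemma pow_n_C (w : C) (n : nat) : @pow_n C_Ring w n = (w ^ n)%C.
Proof. induction n; simpl; [reflexivity|]. rewrite IHn. reflexivity. Qed.

Lemma pow_n_C2 (w : C) (n : nat) : @pow_n (AbsRing.Ring C_AbsRing) w n = (w ^ n)%C.
Proof. induction n; simpl; [reflexivity|]. rewrite IHn. reflexivity. Qed.

Lemma Cpow_mult (c w : C) (n : nat) : ((c * w) ^ n = c ^ n * w ^ n)%C.
Proof. induction n; simpl; [ring|]. rewrite IHn. ring. Qed.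

Theorem mainTheorem8 (Rad q : R) (f : C -> C) (a : nat -> C) :
  1 < q -> q < Rad ->
  (forall z : C, Cmod z < Rad -> @is_pseries C_AbsRing C_NormedModule a z (f z)) ->
  forall z : C, Cmod z < Rad / q ^ 2 ->
  @is_series C_AbsRing C_NormedModule
    (fun m : nat =>
       if (m <? 2)%nat then RtoC 0
       else (a m
             * RtoC (q * sum_n_m (fun i => qint q i) 1 (m - 1)
                     + sum_n_m (fun i => qint (/ q) i) 1 (m - 1))
             * pow_n z (m - 1) * (RtoC 1 - z))%C)
    (Lq q f z).
Proof.
  intros Hq HR Hf z Hz.
  assert (Hq2 : 1 < q ^ 2) by nra.
  assert (Hmz : 0 <= Cmod z) by apply Cmod_ge_0.
  assert (HzR : Cmod z < Rad).
  { apply Rlt_le_trans with (Rad / q ^ 2); auto.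
    apply Rmult_le_reg_r with (q ^ 2); [lra|]. unfold Rdiv.
    rewrite Rmult_assoc, Rinv_l by lra. nra. }
  destruct (Ceq_dec z (RtoC 0)) as [Hz0|Hz0].
  -
    assert (HL : Lq q f z = RtoC 0).
    { unfold Lq, Dq. rewrite Hz0. destruct (Ceq_dec 0 0); [|congruence].
      unfold Cdiv. ring. }
    rewrite HL.
    assert (H0 : @is_series C_AbsRing C_NormedModule (fun _ => RtoC 0) (RtoC 0)).
    { pose proof (is_series_scal (K:=C_AbsRing) (RtoC 0) _ _ (Hf z HzR)) as H0.
      assert (E0 : scal (K:=C_AbsRing) (V:=C_NormedModule) (RtoC 0) (f z) = RtoC 0).
      { unfold scal; simpl; unfold mult; simpl. ring. }
      rewrite E0 in H0. eapply is_series_ext; [|exact H0]. intro n.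
      unfold scal; simpl; unfold mult; simpl. ring. }
    revert H0. apply is_series_ext. intro m.
    destruct (m <? 2)%nat eqn:E; [reflexivity|].
    apply Nat.ltb_ge in E. rewrite Hz0, ?pow_n_C, ?pow_n_C2.
    destruct m as [|[|m]]; try lia. replace (S (S m) - 1)%nat with (S m) by lia.
    simpl. ring.
  -
    assert (Hqn : RtoC q <> RtoC 0) by (intro h; apply RtoC_inj in h; lra).
    assert (Hq1 : (RtoC q - RtoC 1)%C <> RtoC 0).
    { rewrite <- RtoC_minus. intro h; apply RtoC_inj in h; lra. }
    assert (Hq1' : (RtoC 1 - RtoC q)%C <> RtoC 0).
    { rewrite <- RtoC_minus. intro h; apply RtoC_inj in h; lra. }
    assert (Hiq : RtoC (/ q) = (/ RtoC q)%C) by (apply RtoC_inv; lra).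
    assert (Hiq1 : (/ RtoC q - RtoC 1)%C <> RtoC 0).
    { rewrite <- Hiq, <- RtoC_minus. intro h; apply RtoC_inj in h.
      assert (/q < 1). { apply Rinv_lt_1; lra. } lra. }
    assert (HB : Cmod (RtoC q * z) < Rad).
    { rewrite Cmod_mult, Cmod_R, Rabs_pos_eq by lra.
      apply Rlt_le_trans with (q * (Rad / q^2)); [nra|].
      unfold Rdiv. replace (q * (Rad * / q ^ 2)) with (Rad * / q) by (field; lra).
      assert (0 < /q < 1) by (split; [apply Rinv_0_lt_compat|apply Rinv_lt_1]; lra).
      nra. }
    assert (HD : Cmod (RtoC (/ q) * z) < Rad).
    { rewrite Cmod_mult, Cmod_R, Rabs_pos_eq.
      - assert (0 < /q < 1) by (split; [apply Rinv_0_lt_compat|apply Rinv_lt_1]; lra). nra.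
      - left; apply Rinv_0_lt_compat; lra. }
    pose proof (Hf _ HzR) as SA. pose proof (Hf _ HB) as SB. pose proof (Hf _ HD) as SD.
    unfold is_pseries in SA, SB, SD.
    set (k1 := ((RtoC 1 - z) * RtoC q / ((RtoC q - RtoC 1) * ((RtoC q - RtoC 1) * z)))%C).
    set (k2 := (- ((RtoC 1 - z) * RtoC q / ((RtoC q - RtoC 1) * ((RtoC (/ q) - RtoC 1) * z))))%C).
    pose proof (is_series_scal (K:=C_AbsRing) k1 _ _ (is_series_minus _ _ _ _ SB SA)) as S1.
    pose proof (is_series_scal (K:=C_AbsRing) k2 _ _ (is_series_minus _ _ _ _ SD SA)) as S2.
    pose proof (is_series_plus _ _ _ _ S1 S2) as S.
    replace (Lq q f z) with
      (plus (scal (K:=C_AbsRing) (V:=C_NormedModule) k1 (plus (f (RtoC q * z)%C) (opp (f z))))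
            (scal (K:=C_AbsRing) (V:=C_NormedModule) k2 (plus (f (RtoC (/q) * z)%C) (opp (f z))))).
    2:{ unfold Lq, Dq. destruct (Ceq_dec z 0); [contradiction|].
        unfold plus, scal, opp; simpl; unfold mult; simpl.
        unfold k1, k2. rewrite Hiq. field; repeat split; cbv beta; auto. }
    revert S. apply is_series_ext. intro m.
    unfold plus, scal, opp; simpl; unfold mult; simpl. rewrite ?pow_n_C, ?pow_n_C2.
    rewrite !Cpow_mult, <- !RtoC_pow.
    destruct m as [|m].
    + simpl. change (@one (AbsRing.Ring C_AbsRing)) with (RtoC 1). ring.
    + simpl (pow_n _ _). unfold mult; simpl. rewrite ?pow_n_C, ?pow_n_C2.
      replace (S m <? 2)%nat with (m <? 1)%nat by reflexivity.
      replace (S m - 1)%nat with m by lia.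
      transitivity (a (S m) * RtoC (q / (q - 1) * (qint q (S m) - qint (/ q) (S m))) * (z ^ m)%C * (RtoC 1 - z))%C.
      * assert (E1 : q ^ S m = 1 + (q - 1) * qint q (S m)) by (rewrite <- qint_pow; ring).
        assert (E2 : (/q) ^ S m = 1 + (/q - 1) * qint (/q) (S m)) by (rewrite <- qint_pow; ring).
        change (q * q ^ m) with (q ^ S m). change (/ q * (/ q) ^ m) with ((/q) ^ S m).
        rewrite ?pow_n_C, ?pow_n_C2.
        rewrite E1, E2.
        rewrite RtoC_mult, RtoC_div, !RtoC_minus, !RtoC_plus, !RtoC_mult, !RtoC_minus by lra.
        unfold k1, k2. rewrite Hiq.
        replace (@pow_n (AbsRing.Ring C_AbsRing) z m) with (z ^ m)%C by (symmetry; apply pow_n_C2).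
        field; repeat split; cbv beta; auto.
      * destruct (m <? 1)%nat eqn:E.
        -- apply Nat.ltb_lt in E. replace m with 0%nat by lia. simpl.
           replace (q / (q - 1) * (0 + 1 - (0 + 1))) with 0 by (field; lra). ring.
        -- rewrite ?Nat.sub_0_r. rewrite sum_id by lra.
           replace (@pow_n (AbsRing.Ring C_AbsRing) z m) with (z ^ m)%C by (symmetry; apply pow_n_C2).
           reflexivity.
Qed.
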